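(* Let $k\ge r\ge3$ and $p,t\ge 0$ be integers and let $\pi\in\mathbb{C}_{<}(k,r|p,t)$ with $\pi^{(2)}_p\ge 2t+6$. Then every part of $\pi$ equal to $2t+2$ or to $2t+4$ has mark at most $1$ in $GG(\pi)$.
   Context: A partition $\pi=(\pi_1,\dots,\pi_\ell)$ is a finite non-increasing sequence of positive integers; ''$a$ occurs in $\pi$'' means $a=\pi_i$ for some $i$. Göllnitz–Gordon marking: $GG(\pi)$ assigns a positive integer (mark) to each part, processing the parts from smallest to largest; $\pi_i$ receives the smallest positive integer different from the marks of all parts $\pi_g$ with $g>i$ and $\pi_i-\pi_g\le 2$, where $\pi_i-\pi_g<2$ is required when $\pi_i$ is odd. An ''$r$-marked part $a$'' is a part equal to $a$ with mark $r$. $N_i(\pi)$ is the number of parts with mark $i$; $\pi^{(i)}_1\ge\dots\ge\pi^{(i)}_{N_i(\pi)}$ are the parts with mark $i$, with $\pi^{(i)}_0=+\infty$, $\pi^{(i)}_{N_i(\pi)+1}=-\infty$. $\mathbb{C}(k,r)$: partitions with (i) no odd part repeated; (ii) $\pi_i\ge\pi_{i+k-1}+2$ for $1\le i\le\ell-k+1$, strict if $\pi_i$ even; (iii) at most $r-1$ parts $\le 2$. Starting types: for $\pi\in\mathbb{C}(k,r)$ with $N_2=N_2(\pi)\ge1$, let $l$ be the largest integer in $\{0,\dots,N_2\}$ such that no odd part of $\pi$ is $\ge\pi^{(2)}_l$; for $l<i\le N_2$, $\pi^{(2)}_i$ has type $s_{-1}$. For $b=1,\dots,l$ in increasing order, type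 and auxiliary $\sigma_b$: for $b=1$: Case 1: 1-marked part $\pi^{(2)}_1-1$ exists and $\pi^{(2)}_1+2$ does not occur: type $s_0$, $\sigma_1=\pi^{(2)}_1-1$; Case 2: 1-marked $\pi^{(2)}_1-2$ exists and $\pi^{(2)}_1+2$ does not occur: type $s_1$, $\sigma_1=\pi^{(2)}_1-2$; Case 3: 1-marked $\pi^{(2)}_1+2$ exists: type $s_2$, $\sigma_1=\pi^{(2)}_1+2$; Case 4: 1-marked $\pi^{(2)}_1$ exists: type $s_3$, $\sigma_1=\pi^{(2)}_1$. For $2\le b\le l$: Case 1: 1-marked $\pi^{(2)}_b-1$ exists and, if a 1-marked $\pi^{(2)}_b+2$ exists, $\sigma_{b-1}=\pi^{(2)}_b+2$: type $s_0$, $\sigma_b=\pi^{(2)}_b-1$; Case 2: same with $\pi^{(2)}_b-2$: type $s_1$, $\sigma_b=\pi^{(2)}_b-2$; Case 3: 1-marked $\pi^{(2)}_b+2$ exists and $\sigma_{b-1}\ne\pi^{(2)}_b+2$: type $s_2$, $\sigma_b=\pi^{(2)}_b+2$; Case 4: 1-marked $\pi^{(2)}_b$ exists: type $s_3$, $\sigma_b=\pi^{(2)}_b$. $\mathbb{C}_{<}(k,r|p,t)$: the set of $\pi\in\mathbb{C}(k,r)$ such that (1) no odd part is $\ge 2t+1$; (2) $\pi^{(2)}_{p+1}<2t+1<\pi^{(2)}_p$ (in particular $p\le N_2(\pi)$); (3) if $\pi^{(2)}_p=2t+2$ then it is of starting type $s_2$ or $s_3$; (4) if $\pi^{(2)}_{p+1}=2t$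 then it is of starting type $s_0$ or $s_1$. *)

(* Defs.v *)
From mathcomp Require Import all_boot.
Set Implicit Arguments. Unset Strict Implicit. Unset Printing Implicit Defensive.

(* A partition pi = (pi_1,...,pi_l) is stored as s : seq nat with
   pi_i = nth 0 s (i-1). *)
Definition is_partition (s : seq nat) : bool :=
  sorted geq s && all (fun a => 0 < a) s.

(* smallest positive integer not in L *)
Definition mex1 (L : seq nat) : nat :=
  (find (fun m => m.+1 \notin L) (iota 0 (size L).+1)).+1.

(* for b <= a: the part b is "close" to a (a - b <= 2, strict < 2 if a odd) *)
Definition gg_close (a b : nat) : bool :=
  if odd a then a - b < 2 else a - b <= 2.

(* acc: already processed (part, mark) pairs (all parts with larger index) *)
Definition gg_step (acc : seq (nat * nat)) (a : nat) : seq (nat * nat) :=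
  rcons acc (a, mex1 [seq q.2 | q <- acc & gg_close a q.1]).

(* marks aligned with s: nth 0 (gg_marks s) (i-1) is the mark of pi_i.
   Parts are processed from smallest (last index) to largest. *)
Definition gg_marks (s : seq nat) : seq nat :=
  rev [seq q.2 | q <- foldl gg_step [::] (rev s)].

Definition marked (s : seq nat) : seq (nat * nat) := zip s (gg_marks s).

Definition has1 (s : seq nat) (a : nat) : bool := (a, 1) \in marked s.

(* pi^{(i)}_1 >= ... >= pi^{(i)}_{N_i}: pi^{(i)}_j = nth 0 (mparts s i) (j-1) *)
Definition mparts (s : seq nat) (i : nat) : seq nat :=
  [seq q.1 | q <- marked s & q.2 == i].

Definition N (s : seq nat) (i : nat) : nat := size (mparts s i).

(* pi^{(2)}_j for 1 <= j <= N_2 *)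
Definition pi2 (s : seq nat) (j : nat) : nat := nth 0 (mparts s 2) j.-1.

(* extended comparisons, with pi^{(2)}_0 = +oo and pi^{(2)}_{N_2+1} = -oo *)
Definition lt_pi2 (s : seq nat) (x j : nat) : bool :=
  (j == 0) || ((j <= N s 2) && (x < pi2 s j)).
Definition le_pi2 (s : seq nat) (x j : nat) : bool :=
  (j == 0) || ((j <= N s 2) && (x <= pi2 s j)).
Definition pi2_lt (s : seq nat) (j x : nat) : bool :=
  (N s 2 < j) || (pi2 s j < x).

Definition in_C (k r : nat) (s : seq nat) : bool :=
  [&& is_partition s,
      all (fun a => odd a ==> (count_mem a s <= 1)) s,
      all (fun i => let a := nth 0 s i in let b := nth 0 s (i + k.-1) in
                    if odd a then b + 2 <= a else b + 2 < a)
          (iota 0 (size s - k.-1)) &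
      count (fun a => a <= 2) s <= r.-1].

(* Sundef: none of the four cases applies (type not defined) *)
Inductive stype := Sm1 | S0 | S1 | S2 | S3 | Sundef.


(* type of the 2-marked part x = pi^{(2)}_b, given whether b = 1 and
   sigma_{b-1}; cases are tried in the order Case 1, 2, 3, 4. *)
Definition type_step (s : seq nat) (first : bool) (sig : option nat)
    (x : nat) : stype * option nat :=
  let c12 := if first then (x + 2) \notin s
             else has1 s (x + 2) ==> (sig == Some (x + 2)) in
  let c3 := has1 s (x + 2) && (first || (sig != Some (x + 2))) in
  if has1 s (x - 1) && c12 then (S0, Some (x - 1))
  else if has1 s (x - 2) && c12 then (S1, Some (x - 2))
  else if c3 then (S2, Some (x + 2))
  else if has1 s x then (S3, Some x)
  else (Sundef, None).

Fixpoint types_aux (s : seq nat) (first : bool) (sig : option nat)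
    (xs : seq nat) : seq stype :=
  match xs with
  | [::] => [::]
  | x :: xs' => let: (ty, sg) := type_step s first sig x in
                ty :: types_aux s false sg xs'
  end.

Definition no_odd_ge (s : seq nat) (l : nat) : bool :=
  (l == 0) || all (fun a => ~~ odd a || (a < pi2 s l)) s.

Definition lstart (s : seq nat) : nat :=
  \max_(0 <= l < (N s 2).+1 | no_odd_ge s l) l.

Definition start_types (s : seq nat) : seq stype :=
  types_aux s true None (take (lstart s) (mparts s 2))
  ++ nseq (N s 2 - lstart s) Sm1.

Definition stype_of (s : seq nat) (b : nat) : stype :=
  nth Sundef (start_types s) b.-1.

Definition in_Clt (k r p t : nat) (s : seq nat) : Prop :=
  [/\ in_C k r s,
      all (fun a => odd a ==> (a < 2 * t + 1)) s,
      [&& p <= N s 2, pi2_lt s p.+1 (2 * t + 1) & lt_pi2 s (2 * t + 1) p],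
      (1 <= p <= N s 2) -> pi2 s p = 2 * t + 2 ->
        stype_of s p = S2 \/ stype_of s p = S3 &
      p.+1 <= N s 2 -> pi2 s p.+1 = 2 * t ->
        stype_of s p.+1 = S0 \/ stype_of s p.+1 = S1].

(* Main.v *)
Require Import Defs.
From mathcomp Require Import all_boot.
From mathcomp Require Import zify.

Definition ginv (A : seq (nat * nat)) := forall j, j < size A ->
  (nth (0,0) A j).2 = mex1 [seq q.2 | q <- take j A & gg_close (nth (0,0) A j).1 q.1].

Lemma ginv_step A x : ginv A -> ginv (gg_step A x).
Proof.
move=> H j; rewrite /gg_step size_rcons ltnS leq_eqVlt => /orP[/eqP->|lt].
  by rewrite nth_rcons ltnn eqxx -cats1 take_size_cat.
rewrite nth_rcons lt -cats1 take_cat lt; exact: H.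
Qed.

Lemma foldl_gg acc xs : ginv acc ->
  let A := foldl gg_step acc xs in
  [/\ ginv A, size A = size acc + size xs & map fst A = map fst acc ++ xs].
Proof.
elim: xs acc => [|x xs IH] acc H /=; first by rewrite addn0 cats0.
have [H1 H2 H3] := IH _ (@ginv_step acc x H).
split => //.
  by rewrite H2 /gg_step size_rcons addSnnS.
by rewrite H3 /gg_step map_rcons -cats1 -catA.
Qed.

Lemma mex1_lt L m : 1 <= m < mex1 L -> m \in L.
Proof.
rewrite /mex1 => /andP[m1 mlt].
have := @before_find _ 0 (fun m => m.+1 \notin L) (iota 0 (size L).+1) m.-1.
have hf := find_size (fun m => m.+1 \notin L) (iota 0 (size L).+1).
rewrite size_iota in hf.
rewrite nth_iota; last by lia.
rewrite add0n prednK //; move=> h; apply/negbFE/h; lia.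
Qed.

Lemma mex1_1 L : mex1 L = 1 -> 1 \notin L.
Proof.
rewrite /mex1 => /eqP; rewrite eqSS => /eqP e.
have hs : has (fun m => m.+1 \notin L) (iota 0 (size L).+1).
  by rewrite has_find e size_iota.
have := nth_find 0 hs; by rewrite e nth_iota.
Qed.

Lemma inL_earlier A j x m :
  m \in [seq q.2 | q <- take j A & gg_close x q.1] ->
  exists j', [/\ j' < j, j' < size A, gg_close x (nth (0,0) A j').1 & (nth (0,0) A j').2 = m].
Proof.
case/mapP => q; rewrite mem_filter => /andP[cl qin] ->.
exists (index q (take j A)).
have hi : index q (take j A) < size (take j A) by rewrite index_mem.
have hq := nth_index (0,0) qin.
rewrite nth_take in hq; last by move: hi; rewrite size_take; case: ifP; lia.
rewrite hq; split => //; move: hi; rewrite size_take; case: ifP; lia.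
Qed.
Definition GA s := foldl gg_step [::] (rev s).

Lemma GA_props s : [/\ ginv (GA s), size (GA s) = size s & map fst (GA s) = rev s].
Proof.
have g0 : ginv [::] by [].
have [H1 H2 H3] := @foldl_gg [::] (rev s) g0.
by split => //; rewrite /GA H2 size_rev.
Qed.

Lemma marked_rev s : marked s = rev (GA s).
Proof.
have [_ H2 H3] := GA_props s.
rewrite /marked /gg_marks -/(GA s).
rewrite -[s in zip s _]revK -H3 -rev_zip ?size_map // zip_unzip //.
Qed.

Lemma nth_GA_fst s j : j < size s -> (nth (0,0) (GA s) j).1 = nth 0 s (size s - j.+1).
Proof.
have [_ H2 H3] := GA_props s => hj.
rewrite -(nth_map _ 0) ?H2 // H3 nth_rev //.
Qed.

Lemma GA_sorted s j1 j2 : sorted geq s -> j1 <= j2 -> j2 < size s ->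
  (nth (0,0) (GA s) j1).1 <= (nth (0,0) (GA s) j2).1.
Proof.
move=> ss le12 lt2.
rewrite !nth_GA_fst //; last by lia.
have := @sorted_leq_nth _ geq _ _ 0 s ss (size s - j2.+1) (size s - j1.+1).
apply; rewrite ?inE; try lia.
by move=> a b c /= h1 h2; apply: leq_trans h2 h1.
by move=> a /=.
Qed.

Lemma GA_in s j : j < size s -> (nth (0,0) (GA s) j).1 \in s.
Proof. move=> hj; rewrite nth_GA_fst //; apply: mem_nth; move: hj; case: (size s) => // n _; by rewrite subSS ltnS leq_subr. Qed.

Lemma has1_GA s a : has1 s a = ((a,1) \in GA s).
Proof. by rewrite /has1 marked_rev mem_rev. Qed.

Lemma GA_mem_nth s q : q \in GA s -> exists j, j < size s /\ nth (0,0) (GA s) j = q.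
Proof.
have [_ H2 _] := GA_props s => qin.
exists (index q (GA s)); rewrite nth_index // -H2 index_mem //.
Qed.

Lemma gg_marks_nth s i : i < size s ->
  nth 0 (gg_marks s) i = (nth (0,0) (GA s) (size s - i.+1)).2
  /\ nth 0 s i = (nth (0,0) (GA s) (size s - i.+1)).1.
Proof.
have [_ H2 H3] := GA_props s => hi.
split; last by rewrite nth_GA_fst; [congr nth; lia | lia].
rewrite /gg_marks -/(GA s) nth_rev ?size_map ?H2 //.
rewrite (nth_map (0,0)) //; rewrite H2; lia.
Qed.

Lemma mparts_sorted s : sorted geq s -> sorted geq (mparts s 2).
Proof.
move=> ss; rewrite /mparts sorted_map.
apply: sorted_filter.
  by move=> a b c /= h1 h2; apply: leq_trans h2 h1.
have : sorted geq (map fst (marked s)).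
  have e : [seq q.1 | q <- zip s (gg_marks s)] = s.
    apply: unzip1_zip.
    by rewrite /gg_marks size_rev size_map; case: (GA_props s) => _ -> _.
  by rewrite /marked e.
by rewrite sorted_map.
Qed.

Lemma mparts_mem s y : (y,2) \in GA s -> y \in mparts s 2.
Proof.
move=> h; rewrite /mparts; apply/mapP; exists (y,2) => //.
by rewrite mem_filter /= marked_rev mem_rev h.
Qed.

Lemma geq_trans : transitive geq.
Proof. by move=> a b c /= h1 h2; apply: leq_trans h2 h1. Qed.

Lemma no_two_close1 (s : seq nat) (j1 j2 a b : nat) : sorted geq s -> j1 < size s -> j2 < size s ->
  nth (0,0) (GA s) j1 = (a,1) -> nth (0,0) (GA s) j2 = (b,1) -> b < a ->
  gg_close a b -> False.
Proof.
move=> ss h1 h2 e1 e2 ba cl.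
have [gi sz _] := GA_props s.
have j21 : j2 < j1.
  rewrite ltnNge; apply/negP => le.
  have := @GA_sorted s j1 j2 ss le h2; rewrite e1 e2 /=; lia.
have := gi j1; rewrite sz => /(_ h1); rewrite e1 /= => /esym /mex1_1 /negP; apply.
apply/mapP; exists (b,1) => //; rewrite mem_filter /= cl /=.
rewrite -e2 -(nth_take (0,0) j21); apply: mem_nth; rewrite size_take sz h1; done.
Qed.

Lemma two_marked_range (s : seq nat) (k r p t y : nat) : in_Clt k r p t s -> le_pi2 s (2 * t + 6) p ->
  (y,2) \in GA s -> 2 * t + 6 <= y \/
  [/\ y <= pi2 s p.+1, p.+1 <= N s 2 & pi2 s p.+1 < 2 * t + 1].
Proof.
case=> [/and4P[/andP[ss _] _ _ _] _ /and3P[pN plt ltp] _ _] le yin.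

have ym := @mparts_mem s y yin.
have sm := @mparts_sorted s ss.
set ms := mparts s 2 in ym sm.
have hj : index y ms < N s 2 by rewrite /N index_mem.
have ey := nth_index 0 ym.
have hsl := @sorted_leq_nth _ geq geq_trans (fun x => leqnn x) 0 ms sm.
move: pN hj; rewrite /N -/ms => pN hj.
case: (ltnP (index y ms) p) => hp.
  left; move: le; rewrite /le_pi2; case: eqP => [p0|_] /=; first by lia.
  move=> /andP[_ h]; apply: (leq_trans h); rewrite /pi2 -ey.
  by apply: hsl; rewrite ?inE /=; lia.
right; have pN' : p.+1 <= size ms by lia.
move: plt; rewrite /pi2_lt /N -/ms ltnNge pN' /= => h; split => //.
rewrite /pi2 /= -ey; apply: hsl; rewrite ?inE /=; lia.
Qed.

Lemma types_aux_size (s : seq nat) f sg (xs : seq nat) :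
  size (types_aux s f sg xs) = size xs.
Proof.
elim: xs f sg => [|x xs IH] f sg //=.
by case: (type_step s f sg x) => ty sg1 /=; rewrite IH.
Qed.

Lemma type_step_sig (s : seq nat) f sg (x y : nat) :
  (type_step s f sg x).2 = Some y -> x <= y + 2.
Proof.
rewrite /type_step; repeat case: ifP => _ //=; case=> <-; lia.
Qed.

Lemma types_aux_nth (s : seq nat) (xs : seq nat) : forall f sg (j : nat), j < size xs ->
  exists f' sg', nth Sundef (types_aux s f sg xs) j = (type_step s f' sg' (nth 0 xs j)).1
   /\ (j = 0 -> f' = f /\ sg' = sg)
   /\ (0 < j -> f' = false /\ forall y, sg' = Some y -> nth 0 xs j.-1 <= y + 2).
Proof.
elim: xs => [|x xs IH] f sg j //= hj.
case e: (type_step s f sg x) => [ty sg1].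
case: j hj => [|j] hj.
  by exists f, sg; rewrite /= e.
have [f' [sg' [h1 [h2 h3]]]] := IH false sg1 j hj.
exists f', sg'; split => //; split => // _.
case: j hj h1 h2 h3 => [|j] hj h1 h2 h3.
  have [-> ->] := h2 erefl; split => // y ey.
  by apply: (@type_step_sig s f sg); rewrite e.
exact: h3.
Qed.

Lemma type_step_S01 (s : seq nat) f sg (x : nat) :
  (type_step s f sg x).1 = S0 \/ (type_step s f sg x).1 = S1 ->
  (has1 s (x-1) || has1 s (x-2)) &&
  (if f then (x+2) \notin s else has1 s (x+2) ==> (sg == Some (x+2))).
Proof.
rewrite /type_step; case: ifP => [/andP[-> ->]|_] //.
case: ifP => [/andP[-> ->]|_]; first by rewrite orbT.
case: ifP => _; first by case.
by case: ifP => _; case.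
Qed.

Lemma nth_take' (T : Type) (x0 : T) n (l : seq T) i :
  i < size (take n l) -> nth x0 (take n l) i = nth x0 l i.
Proof.
move=> h; rewrite nth_take //; move: h; rewrite size_take; case: ifP => // h1 h2.
apply: leq_trans h2 _; rewrite leqNgt h1 //.
Qed.

Lemma type_cons (s : seq nat) (k r p t : nat) :
  in_Clt k r p t s -> le_pi2 s (2 * t + 6) p -> p.+1 <= N s 2 -> pi2 s p.+1 = 2 * t ->
  (has1 s (2 * t - 1) || has1 s (2 * t - 2)) /\ (p = 0 -> (2 * t + 2) \notin s)
  /\ (0 < p -> ~~ has1 s (2 * t + 2)).
Proof.
case=> _ _ _ _ H4 le pN e.
have := H4 pN e; rewrite /stype_of /start_types nth_cat types_aux_size /=.
case: ifP => hp; last by rewrite nth_nseq; case: ifP => _ [].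
have [f' [sg' [h1 [h2 h3]]]] := @types_aux_nth s _ true None p hp.
rewrite h1 nth_take' // -/(pi2 s p.+1) e => /type_step_S01 /andP[-> hc].
split => //; split.
  by move=> p0; have [ef _] := h2 p0; move: hc; rewrite ef.
move=> p0; have [ef hy] := h3 p0; move: hc; rewrite ef.
clear h1 h2 h3; case: sg' hy => [y|] hy; last by rewrite implybF.
have := hy y erefl; rewrite nth_take'; last by lia.
move: le; rewrite /le_pi2 /pi2; case: eqP => [?|_] /=; first by lia.
move=> /andP[_ h] h'.
have ne : (Some y == Some (2 * t + 2)) = false by apply/eqP => [[]]; lia.
by rewrite ne implybF.
Qed.

Theorem lemma2p4 (k r p t : nat) (s : seq nat) :
  3 <= r -> r <= k ->
  in_Clt k r p t s ->
  le_pi2 s (2 * t + 6) p ->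
  forall i, i < size s ->
    (nth 0 s i = 2 * t + 2 \/ nth 0 s i = 2 * t + 4) ->
    nth 0 (gg_marks s) i <= 1.
Proof.
move=> r3 rk HC le i hi hx.
have HC' := HC.
case: HC' => /and4P[/andP[ss pos] _ _ _] odd1 _ _ _.
have [gi sz _] := GA_props s.
have [em ex] := @gg_marks_nth s i hi.
rewrite em; rewrite ex in hx.
set j := size s - i.+1 in hx *.
have hj : j < size s by rewrite /j; move: hi; case: (size s) => // n _; rewrite subSS ltnS leq_subr.
case e: (nth (0,0) (GA s) j) => [x M]; rewrite e /= in hx *.
have := gi j; rewrite sz => /(_ hj); rewrite e /= => hM.
have xev : odd x = false by case: hx => ->; rewrite oddD oddM.
have xs : x \in s by have := @GA_in s j hj; rewrite e.
rewrite leqNgt; apply/negP => M2.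
have h1 : 1 \in [seq q.2 | q <- take j (GA s) & gg_close x q.1].
  by apply: mex1_lt; rewrite -hM M2.
case: (ltnP M 3) => M3.
  have M2' : M = 2 by clear -M2 M3; lia.
  have xin : (x,2) \in GA s by rewrite -M2' -e; apply: mem_nth; rewrite sz.
  have := @two_marked_range s k r p t x HC le xin; clear -hx; case: hx => hx [h|[h _ h2]]; lia.
have h2 : 2 \in [seq q.2 | q <- take j (GA s) & gg_close x q.1].
  by apply: mex1_lt; rewrite -hM.
have [j2 [j2j j2s cl2 m2]] := @inL_earlier _ _ _ _ h2.
have [j1 [j1j j1s cl1 m1]] := @inL_earlier _ _ _ _ h1.
rewrite sz in j1s j2s.
case e2 : (nth (0,0) (GA s) j2) => [y2 z2]; rewrite e2 /= in cl2 m2; subst z2.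
case e1 : (nth (0,0) (GA s) j1) => [y1 z1]; rewrite e1 /= in cl1 m1; subst z1.
have y2x : y2 <= x by have := @GA_sorted s j2 j ss (ltnW j2j) hj; rewrite e e2.
have y1x : y1 <= x by have := @GA_sorted s j1 j ss (ltnW j1j) hj; rewrite e e1.
move: cl1 cl2; rewrite /gg_close xev => cl1 cl2.
have y2in : (y2,2) \in GA s by rewrite -e2; apply: mem_nth; rewrite sz.
have y1in : (y1,1) \in GA s by rewrite -e1; apply: mem_nth; rewrite sz.
have y2s : y2 \in s by have := @GA_in s j2 j2s; rewrite e2.
have y1s : y1 \in s by have := @GA_in s j1 j1s; rewrite e1.
have y2pos : 0 < y2 by move/allP: pos => /(_ _ y2s).
have y1odd : odd y1 ==> (y1 < 2 * t + 1) by move/allP: odd1 => /(_ _ y1s).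
have := @two_marked_range s k r p t _ HC le y2in.
case=> [|[hP pN hP2]]; first by move=> h; clear -h hx y2x; case: hx => hx; lia.
have ey2 : y2 = 2 * t by clear -hP hP2 cl2 hx y2x; case: hx => hx; lia.
have ex2 : x = 2 * t + 2 by clear -hP hP2 cl2 hx y2x; case: hx => hx; lia.
have eP : pi2 s p.+1 = 2 * t by clear -hP hP2 ey2; lia.
have [hb [hp0 hp1]] := @type_cons s k r p t HC le pN eP.
case: (posnP p) => p0.
  by move: (hp0 p0); rewrite -ex2 xs.
have y1c : y1 = 2 * t \/ y1 = 2 * t + 2.
  have : y1 != 2 * t + 1.
    apply/eqP => ey1; clear -y1odd ey1; move: y1odd; rewrite ey1 oddD oddM /=; lia.
  move=> ne; clear -ne y1x ex2 cl1; move/eqP: ne; lia.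
case: y1c => ey1; last first.
  by move: (hp1 p0); rewrite has1_GA -ey1 y1in.
have [b [hb1 hbb]] : exists b, (b,1) \in GA s /\ (b = 2 * t - 1 \/ b = 2 * t - 2).
  move: hb; rewrite !has1_GA => /orP[h|h]; [exists (2 * t - 1) | exists (2 * t - 2)]; auto.
have [j0 [j0s e0]] := @GA_mem_nth s _ hb1.
apply: (@no_two_close1 s j1 j0 (2 * t) b ss j1s j0s); first by rewrite e1 ey1.
- exact: e0.
- clear -y2pos ey2 hbb; case: hbb; lia.
- rewrite /gg_close oddM /=; clear -y2pos ey2 hbb; case: hbb; lia.
Qed.
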